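(* Let $X$ be a random vector in $\mathbb{R}^p$ with finite second moments and mean $\mu$, let $K\ge1$, $s>0$, and $\mathcal{W}=\{\mathbf{w}\in\mathbb{R}^p:\|\mathbf{w}\|_2^2\le1,\|\mathbf{w}\|_1\le s,w_j\ge0\ \forall j\}$. Then the map \[ (\mathbf{w},A)\mapsto \mathbb{E}\Bigl[\|X-\mu\|_{\mathbf{w}}^2-\min_{a\in A}\|X-a\|_{\mathbf{w}}^2\Bigr], \] defined for $\mathbf{w}\in\mathcal{W}$ and $A\subset\mathbb{R}^p$ with $\#A=K$, is continuous with respect to the metric $d((\mathbf{w}_1,A_1),(\mathbf{w}_2,A_2))=\max\{\|\mathbf{w}_1-\mathbf{w}_2\|,d_H(A_1,A_2)\}$, where $\|\cdot\|$ is the Euclidean norm and $d_H$ is the Hausdorff distance between subsets of $\mathbb{R}^p$ (with respect to the Euclidean metric).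
   Context: $\|\mathbf{x}\|_{\mathbf{w}}^2=\sum_{j=1}^p w_jx_j^2$. The Hausdorff distance is $d_H(A,B)=\max\{\sup_{x\in A}\inf_{y\in B}\|x-y\|,\ \sup_{y\in B}\inf_{x\in A}\|x-y\|\}$. *)

(* Defs.v *)
From HB Require Import structures.
From mathcomp Require Import all_boot all_order all_algebra.
From mathcomp Require Import all_classical all_reals all_analysis.
Set Implicit Arguments. Unset Strict Implicit. Unset Printing Implicit Defensive.
Import Order.TTheory GRing.Theory Num.Theory.
Local Open Scope classical_set_scope.
Local Open Scope ring_scope.

Definition enorm (R : realType) (p : nat) (v : 'rV[R]_p) : R :=
  Num.sqrt (\sum_(j < p) v 0 j ^+ 2).

Definition l1norm (R : realType) (p : nat) (v : 'rV[R]_p) : R :=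
  \sum_(j < p) `|v 0 j|.

Definition wnorm2 (R : realType) (p : nat) (w x : 'rV[R]_p) : R :=
  \sum_(j < p) w 0 j * x 0 j ^+ 2.

Definition Wset (R : realType) (p : nat) (s : R) : set 'rV[R]_p :=
  [set w : 'rV[R]_p | \sum_(j < p) w 0 j ^+ 2 <= 1 /\ l1norm w <= s /\
           forall j : 'I_p, 0 <= w 0 j].

Definition minover (R : realType) (T : Type) (A : set T) (f : T -> R) : R :=
  inf [set f a | a in A].

Definition hausdorff (R : realType) (p : nat) (A B : set 'rV[R]_p) : R :=
  Num.max (sup [set inf [set enorm (x - y) | y in B] | x in A])
          (sup [set inf [set enorm (x - y) | x in A] | y in B]).

Definition meanvec (d : measure_display) (T : measurableType d) (R : realType)
  (P : probability T R) (p : nat) (X : T -> 'rV[R]_p) : 'rV[R]_p :=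
  \row_(j < p) Rintegral P setT (fun t => X t 0 j).

Definition objective (d : measure_display) (T : measurableType d) (R : realType)
  (P : probability T R) (p : nat) (X : T -> 'rV[R]_p)
  (w : 'rV[R]_p) (A : set 'rV[R]_p) : R :=
  Rintegral P setT (fun t =>
    wnorm2 w (X t - meanvec P X) - minover A (fun a => wnorm2 w (X t - a))).

(* Main.v *)
Require Import Defs.
Set Warnings "-all".
From HB Require Import structures.
From mathcomp Require Import all_boot all_order all_algebra.
From mathcomp Require Import all_classical all_reals all_analysis.
From mathcomp Require Import ring lra.
Import Order.TTheory GRing.Theory Num.Theory.
Local Open Scope classical_set_scope.
Local Open Scope ring_scope.

Lemma coord_mean (R : realType) (w w' u m eta : R) :
  `|w - w'| <= eta ->
  `|w * (u - m) ^+ 2 - w' * (u - m) ^+ 2| <= eta * (2 * u ^+ 2 + 2 * m ^+ 2).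
Proof.
move=> h; rewrite -mulrBl normrM.
have h0 : 0 <= `|(u - m) ^+ 2| by [].
have e0 : 0 <= eta by apply: le_trans h.
apply: le_trans (ler_wpM2r h0 h) _.
apply: ler_wpM2l => //.
rewrite ger0_norm ?sqr_ge0 //.
have := sqr_ge0 (u + m); nra.
Qed.

Lemma coord_min (R : realType) (w w' u a b eta M : R) :
  0 <= eta -> eta <= 1 -> `|w - w'| <= eta -> 0 <= w' -> w' <= 1 ->
  `|a - b| <= eta -> `|b| <= M ->
  `|w * (u - a) ^+ 2 - w' * (u - b) ^+ 2| <=
    eta * (3 * u ^+ 2 + (2 * (M + 1) ^+ 2 + 2 * (M + 1) + 1)).
Proof.
move=> e0 e1 hw w0 w1 hab hb.
have -> : w * (u - a) ^+ 2 - w' * (u - b) ^+ 2 =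
   (w - w') * (u - a) ^+ 2 + w' * ((b - a) * (2 * u - a - b)) by ring.
apply: le_trans (ler_normD _ _) _.
have hL : `|a| <= M + 1.
  have : `|a| <= `|a - b| + `|b|.
    by have := ler_normD (a - b) b; rewrite subrK.
  move=> H; move: H hab hb e1; lra.
have h1 : `|(w - w') * (u - a) ^+ 2| <= eta * (2 * u ^+ 2 + 2 * (M + 1) ^+ 2).
  rewrite normrM (ger0_norm (sqr_ge0 (u - a))).
  apply: le_trans (ler_wpM2r (sqr_ge0 (u - a)) hw) _.
  apply: ler_wpM2l => //.
  have ha2 : a ^+ 2 <= (M + 1) ^+ 2.
    rewrite -real_normK ?num_real //; have := normr_ge0 a; nra.
  have := sqr_ge0 (u + a); nra.
have h2 : `|w' * ((b - a) * (2 * u - a - b))| <= eta * (u ^+ 2 + 1 + 2 * (M + 1)).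
  rewrite !normrM (ger0_norm w0).
  have hba : `|b - a| <= eta by rewrite distrC.
  have h3 : `|2 * u - a - b| <= u ^+ 2 + 1 + 2 * (M + 1).
    have hu : `|2 * u| <= u ^+ 2 + 1.
      rewrite normrM ger0_norm // -[u ^+ 2]real_normK ?num_real //.
      have := sqr_ge0 (`|u| - 1); nra.
    have := ler_normD (2 * u) (- a - b).
    have := ler_normD (- a) (- b).
    rewrite !normrN addrA => H1 H2.
    apply: le_trans H2 _.
    have : `|b| <= M + 1 by apply: le_trans hb _; rewrite lerDl.
    move: H1 hu hL; lra.
  have : `|b - a| * `|2 * u - a - b| <= eta * (u ^+ 2 + 1 + 2 * (M + 1)).
    apply: ler_pM => //.
  have : 0 <= `|b - a| * `|2 * u - a - b| by [].
  nra.
apply: le_trans (lerD h1 h2) _.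
rewrite -mulrDr; apply: ler_wpM2l => //.
lra.
Qed.
Lemma inf_img_le (R : realType) (V : Type) (A : set V) (f : V -> R) a :
  (forall x, A x -> 0 <= f x) -> A a -> inf [set f x | x in A] <= f a.
Proof.
move=> h0 Aa; apply: ge_inf; last by exists a.
by exists 0 => _ [x Ax <-]; exact: h0.
Qed.

Lemma inf_img_ge (R : realType) (V : Type) (A : set V) (f : V -> R) c :
  A !=set0 -> (forall x, A x -> c <= f x) -> c <= inf [set f x | x in A].
Proof.
move=> [a Aa] h; apply: lb_le_inf; first by exists (f a), a.
by move=> _ [x Ax <-]; exact: h.
Qed.

Lemma inf_diff (R : realType) (V W : Type) (A : set V) (B : set W)
  (f : V -> R) (g : W -> R) (beta : R) :
  A !=set0 -> B !=set0 -> (forall a, A a -> 0 <= f a) -> (forall b, B b -> 0 <= g b) ->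
  (forall a, A a -> exists2 b, B b & `|f a - g b| <= beta) ->
  (forall b, B b -> exists2 a, A a & `|f a - g b| <= beta) ->
  `|inf [set f x | x in A] - inf [set g x | x in B]| <= beta.
Proof.
move=> nA nB fA gB hAB hBA.
have h1 : inf [set g x | x in B] - beta <= inf [set f x | x in A].
  apply: inf_img_ge => // a Aa.
  have [b Bb hb] := hAB a Aa.
  have := @inf_img_le _ _ B g b gB Bb.
  move: hb; rewrite ler_norml; lra.
have h2 : inf [set f x | x in A] - beta <= inf [set g x | x in B].
  apply: inf_img_ge => // b Bb.
  have [a Aa ha] := hBA b Bb.
  have := @inf_img_le _ _ A f a fA Aa.
  move: ha; rewrite ler_norml; lra.
rewrite ler_norml; lra.
Qed.

Lemma seq_ub (R : realType) (V : eqType) (s : seq V) (F : V -> R) x :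
  x \in s -> F x <= \sum_(y <- s) `|F y|.
Proof.
elim: s => // y s IH; rewrite inE big_cons => /orP [/eqP ->|/IH H].
  by rewrite ler_wpDr ?sumr_ge0 //; apply: le_trans (ler_norm _) _.
by apply: le_trans H _; rewrite lerDr.
Qed.

Lemma finite_ub (R : realType) (V : Type) (A : set V) (F : V -> R) :
  finite_set A -> exists M, forall x, A x -> F x <= M.
Proof.
move=> fA.
have fB : finite_set [set F x | x in A] by apply: finite_image.
move/finite_seqP: fB => [s hs].
exists (\sum_(y <- s) `|y|) => x Ax.
have : [set F x | x in A] (F x) by exists x.
by rewrite hs /= => /(@seq_ub _ _ s id).
Qed.

Lemma coord_le_sum (R : realType) (p : nat) (F : 'I_p -> R) j :
  (forall i, 0 <= F i) -> F j <= \sum_(i < p) F i.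
Proof.
move=> h; rewrite (bigD1 j) //= lerDl sumr_ge0 //.
Qed.


Lemma coord_le_enorm (R : realType) (p : nat) (v : 'rV[R]_p) j :
  `|v 0 j| <= enorm v.
Proof.
rewrite /enorm -sqrtr_sqr ler_sqrt ?sumr_ge0 // => [|i _]; last exact: sqr_ge0.
apply: (@coord_le_sum _ _ (fun i => v 0 i ^+ 2)) => i; exact: sqr_ge0.
Qed.

Lemma wnorm2_ge0 (R : realType) (p : nat) (w v : 'rV[R]_p) :
  (forall j, 0 <= w 0 j) -> 0 <= wnorm2 w v.
Proof. by move=> h; apply: sumr_ge0 => j _; rewrite mulr_ge0 ?sqr_ge0. Qed.

Lemma core (R : realType) (p : nat) (u m w w' : 'rV[R]_p) (A A' : set 'rV[R]_p)
  (eta M : R) :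
  0 <= eta -> eta <= 1 -> (forall j, 0 <= w 0 j) -> (forall j, 0 <= w' 0 j) ->
  (forall j, w' 0 j <= 1) -> (forall j, `|w 0 j - w' 0 j| <= eta) ->
  A !=set0 -> A' !=set0 -> (forall b, A' b -> forall j, `|b 0 j| <= M) ->
  (forall a, A a -> exists2 b, A' b & forall j, `|a 0 j - b 0 j| <= eta) ->
  (forall b, A' b -> exists2 a, A a & forall j, `|a 0 j - b 0 j| <= eta) ->
  `|(wnorm2 w (u - m) - minover A (fun a => wnorm2 w (u - a))) -
    (wnorm2 w' (u - m) - minover A' (fun a => wnorm2 w' (u - a)))|
   <= eta * \sum_(j < p) (5 * u 0 j ^+ 2 +
          (2 * m 0 j ^+ 2 + (2 * (M + 1) ^+ 2 + 2 * (M + 1) + 1))).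
Proof.
move=> e0 e1 w0 w'0 w'1 hw nA nA' hM hAA' hA'A.
set c := (2 * (M + 1) ^+ 2 + 2 * (M + 1) + 1).
have hmean : `|wnorm2 w (u - m) - wnorm2 w' (u - m)| <=
    eta * \sum_(j < p) (2 * u 0 j ^+ 2 + 2 * m 0 j ^+ 2).
  rewrite /wnorm2 -sumrB mulr_sumr; apply: le_trans (ler_norm_sum _ _ _) _.
  by apply: ler_sum => j _; rewrite !mxE; exact: coord_mean.
have hpair : forall a b : 'rV[R]_p, A' b -> (forall j, `|a 0 j - b 0 j| <= eta) ->
    `|wnorm2 w (u - a) - wnorm2 w' (u - b)| <=
    eta * \sum_(j < p) (3 * u 0 j ^+ 2 + c).
  move=> a b A'b hab.
  rewrite /wnorm2 -sumrB mulr_sumr; apply: le_trans (ler_norm_sum _ _ _) _.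
  apply: ler_sum => j _; rewrite !mxE; apply: coord_min => //.
  exact: hM.
have hmin : `|minover A (fun a => wnorm2 w (u - a)) -
              minover A' (fun a => wnorm2 w' (u - a))| <=
    eta * \sum_(j < p) (3 * u 0 j ^+ 2 + c).
  apply: inf_diff => //.
  - by move=> a _; apply: wnorm2_ge0.
  - by move=> a _; apply: wnorm2_ge0.
  - move=> a Aa; have [b A'b hab] := hAA' a Aa.
    by exists b => //; apply: hpair.
  - move=> b A'b; have [a Aa hab] := hA'A b A'b.
    by exists a => //; apply: hpair.
set x := wnorm2 w (u - m); set x' := wnorm2 w' (u - m).
set y := minover A _; set y' := minover A' _.
have -> : x - y - (x' - y') = (x - x') - (y - y') by ring.
apply: le_trans (ler_normB _ _) _.
apply: le_trans (lerD hmean hmin) _.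
rewrite -mulrDr -big_split /=; apply: ler_wpM2l => //.
by apply: ler_sum => j _; lra.
Qed.

Lemma inf_eq_min (R : realType) (S : set R) x : S x -> (forall y, S y -> x <= y) -> inf S = x.
Proof.
move=> Sx h; apply/le_anti/andP; split.
  by apply: ge_inf => //; exists x => y /h.
by apply: lb_le_inf => //; exists x.
Qed.

Definition fm (R : realType) (V T : Type) (F : V -> T -> R) (x0 : V) (s : seq V) (t : T) : R :=
  foldr (fun a r => Num.min (F a t) r) (F x0 t) s.
Arguments fm {R V T}.

Lemma fm_le (R : realType) (V : eqType) T (F : V -> T -> R) x0 s t a :
  a \in s -> fm F x0 s t <= F a t.
Proof.
elim: s => // b s IH; rewrite inE /= => /orP [/eqP ->|/IH H].
  by rewrite ge_min lexx.
by rewrite ge_min H orbT.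
Qed.

Lemma fm_le0 (R : realType) (V : eqType) T (F : V -> T -> R) x0 s t :
  fm F x0 s t <= F x0 t.
Proof. by elim: s => [|b s IH] /=; rewrite ?lexx // ge_min IH orbT. Qed.

Lemma fm_in (R : realType) (V : eqType) T (F : V -> T -> R) x0 s t :
  fm F x0 s t = F x0 t \/ exists2 a, a \in s & fm F x0 s t = F a t.
Proof.
elim: s => [|b s IH] /=; first by left.
case: (leP (F b t) (fm F x0 s t)) => h.
  right; exists b => //; exact: mem_head.
case: IH => [->|[a as_ ->]]; first by left.
by right; exists a => //; rewrite inE as_ orbT.
Qed.

Lemma minover_fm (R : realType) (V : eqType) T (F : V -> T -> R) x0 s t :
  x0 \in s -> minover [set` s] (fun a => F a t) = fm F x0 s t.
Proof.
move=> x0s; rewrite /minover; apply: inf_eq_min.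
  case: (@fm_in _ _ _ F x0 s t) => [->|[a as_ ->]]; first by exists x0.
  by exists a.
by move=> _ [a /= as_ <-]; apply: fm_le.
Qed.

Lemma meas_fm d (T : measurableType d) (R : realType) (V : Type)
  (F : V -> T -> R) x0 s :
  (forall a, measurable_fun setT (F a)) -> measurable_fun setT (fm F x0 s).
Proof.
move=> mF; elim: s => [|b s IH] /=; first exact: mF.
exact: measurable_realfun.measurable_minr.
Qed.

Lemma meas_minover d (T : measurableType d) (R : realType) (p : nat)
  (F : 'rV[R]_p -> T -> R) (A : set 'rV[R]_p) :
  finite_set A -> A !=set0 -> (forall a, measurable_fun setT (F a)) ->
  measurable_fun setT (fun t => minover A (fun a => F a t)).
Proof.
move=> /finite_seqP [s ->] [x0 x0s] mF.
rewrite (_ : (fun t => _) = fm F x0 s); first exact: meas_fm.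
by apply/funext => t; rewrite (@minover_fm _ _ _ F x0).
Qed.

Lemma meas_wn d (T : measurableType d) (R : realType) (p : nat)
  (X : T -> 'rV[R]_p) (w c : 'rV[R]_p) :
  (forall j : 'I_p, measurable_fun setT (fun t => X t 0 j)) ->
  measurable_fun setT (fun t => wnorm2 w (X t - c)).
Proof.
move=> mX; rewrite /wnorm2; apply: measurable_sum => j.
rewrite (_ : (fun t => _) = (fun t => w 0 j * (X t 0 j - c 0 j) ^+ 2)); last first.
  by apply/funext => t; rewrite !mxE.
apply: measurable_realfun.measurable_funM; first exact: measurable_cst.
apply: measurable_realfun.measurable_funX.
apply: measurable_realfun.measurable_funB => //; exact: measurable_cst.
Qed.

Local Open Scope card_scope.

Lemma card_ne (T : Type) (A : set T) (K : nat) : (1 <= K)%N -> A #= `I_K ->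
  finite_set A /\ A !=set0.
Proof.
move=> K1 cA; split; first by exists K.
apply/set0P; apply/negP => /eqP A0e; move: cA; rewrite A0e => /card_esym.
rewrite card_eq0 => /eqP h.
have : `I_K 0%N by rewrite /= K1.
by rewrite h.
Qed.

Lemma coord_bound (R : realType) (p : nat) (A : set 'rV[R]_p) :
  finite_set A -> exists M, 0 <= M /\ forall b, A b -> forall j, `|b 0 j| <= M.
Proof.
move=> fA; have [M hM] := @finite_ub R _ A (fun b => \sum_(j < p) `|b 0 j|) fA.
exists `|M|; split => // b Ab j.
apply: le_trans (ler_norm M); apply: le_trans (hM b Ab).
by apply: (@coord_le_sum _ _ (fun j => `|b 0 j|)).
Qed.

Lemma Wset_coord (R : realType) (p : nat) (s : R) (w : 'rV[R]_p) :
  Wset s w -> (forall j, 0 <= w 0 j) /\ (forall j, w 0 j <= 1).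
Proof.
move=> [h1 [_ h3]]; split => // j.
have : w 0 j ^+ 2 <= 1.
  apply: le_trans h1; apply: (@coord_le_sum _ _ (fun j => w 0 j ^+ 2)) => i.
  exact: sqr_ge0.
have := h3 j; nra.
Qed.

Lemma wnorm2_0 (R : realType) (p : nat) (v : 'rV[R]_p) : wnorm2 0 v = 0.
Proof. by rewrite /wnorm2 big1 // => j _; rewrite mxE mul0r. Qed.

Arguments card_ne {T A K}.
Arguments coord_bound {R p A}.
Arguments Wset_coord {R p s w}.
Arguments coord_le_enorm {R p}.

Theorem theorem2 (d : measure_display) (T : measurableType d) (R : realType)
  (P : probability T R) (p : nat) (X : T -> 'rV[R]_p)
  (K : nat) (s : R) :
  (forall j : 'I_p, measurable_fun setT (fun t => X t 0 j)) ->
  (forall j : 'I_p, P.-integrable setT (fun t => ((X t 0 j) ^+ 2)%:E)) ->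
  (1 <= K)%N -> 0 < s ->
  forall (w0 : 'rV[R]_p) (A0 : set 'rV[R]_p),
    Wset s w0 -> A0 #= `I_K ->
    forall e : R, 0 < e -> exists2 delta : R, 0 < delta &
      forall (w : 'rV[R]_p) (A : set 'rV[R]_p),
        Wset s w -> A #= `I_K ->
        Num.max (enorm (w - w0)) (hausdorff A A0) < delta ->
        `|objective P X w A - objective P X w0 A0| < e.
Proof.
move=> mX iX K1 s0 w0 A0 Ww0 cA0 e e0.
set mu := meanvec P X.
pose g (w : 'rV[R]_p) (A : set 'rV[R]_p) (t : T) :=
  wnorm2 w (X t - mu) - minover A (fun a => wnorm2 w (X t - a)).
pose c (M : R) := 2 * (M + 1) ^+ 2 + 2 * (M + 1) + 1.
pose Bd (M : R) (t : T) := \sum_(j < p) (5 * X t 0 j ^+ 2 + (2 * mu 0 j ^+ 2 + c M)).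
have Bd0 : forall M t, 0 <= M -> 0 <= Bd M t.
  move=> M t M0; apply: sumr_ge0 => j _.
  have := sqr_ge0 (X t 0 j); have := sqr_ge0 (mu 0 j); rewrite /c; nra.
have iBd : forall M, P.-integrable setT (EFin \o Bd M).
  move=> M.
  apply: (eq_integrable _ (fun t => \sum_(j < p) (5 * X t 0 j ^+ 2 + (2 * mu 0 j ^+ 2 + c M))%:E)) => //.
    by move=> t _; rewrite sumEFin.
  apply: integrable_sum => // j _.
  apply: (eq_integrable _ (fun t => ((5%R : R)%:E * ((X t 0 j ^+ 2)%R)%:E + (EFin \o cst ((2 * mu 0 j ^+ 2 + c M)%R)) t)%E)) => //.
  apply: integrableD => //; first exact: integrableZl.
  exact: finite_measure_integrable_cst.
have mg : forall w A, A #= `I_K -> measurable_fun setT (g w A).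
  move=> w A cA; have [fA nA] := card_ne K1 cA.
  apply: measurable_realfun.measurable_funB; first exact: meas_wn.
  apply: (@meas_minover _ _ _ _ (fun a t => wnorm2 w (X t - a))) => // a.
  exact: meas_wn.
have ig : forall w A, Wset s w -> A #= `I_K -> P.-integrable setT (EFin \o g w A).
  move=> w A Ww cA; have [fA nA] := card_ne K1 cA.
  have [M [M0 hM]] := coord_bound fA.
  have [wp w1] := Wset_coord Ww.
  apply: (le_integrable _ _ _ (iBd M)) => //.
    by apply/measurable_realfun.measurable_EFinP; apply: mg.
  move=> t _ /=; rewrite lee_fin (ger0_norm (Bd0 M t M0)).
  have g0 : g 0 A t = 0.
    rewrite /g wnorm2_0 sub0r; apply/eqP; rewrite oppr_eq0; apply/eqP.
    rewrite /minover; apply: inf_eq_min.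
      by case: nA => a Aa; exists a => //; rewrite wnorm2_0.
    by move=> _ [a Aa <-]; rewrite wnorm2_0.
  rewrite -[g w A t]subr0 -g0 -[Bd M t]mul1r.
  apply: core => //.
  - by move=> j; rewrite mxE.
  - by move=> j; rewrite mxE.
  - by move=> j; rewrite mxE subr0 ger0_norm.
  - by move=> a Aa; exists a => // j; rewrite subrr normr0.
  - by move=> a Aa; exists a => // j; rewrite subrr normr0.
have [fA0 nA0] := card_ne K1 cA0.
have [M0 [M00 hM0]] := coord_bound fA0.
have [w0p w01] := Wset_coord Ww0.
set C := Rintegral P setT (Bd M0).
have C0 : 0 <= C by apply: Rintegral_ge0 => t _; exact: Bd0.
exists (Num.min 1 (e / (C + 1))).
  by rewrite lt_min ltr01 /= divr_gt0 // ltr_wpDl.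
move=> w A Ww cA hd.
set delta := Num.min 1 (e / (C + 1)).
have dpos : 0 < delta by rewrite lt_min ltr01 /= divr_gt0 // ltr_wpDl.
have d1 : delta <= 1 by rewrite ge_min lexx.
have dC : delta * (C + 1) <= e.
  have : delta <= e / (C + 1) by rewrite ge_min lexx orbT.
  by rewrite ler_pdivlMr // ltr_wpDl.
have [fA nA] := card_ne K1 cA.
have [wp w1] := Wset_coord Ww.
move: hd; rewrite gt_max => /andP [hw]; rewrite /hausdorff gt_max => /andP [h1 h2].
have hpt : forall t, `|g w A t - g w0 A0 t| <= delta * Bd M0 t.
  move=> t; apply: core => //.
  - exact: ltW.
  - move=> j; apply: ltW; apply: le_lt_trans hw.
    by have := coord_le_enorm (w - w0) j; rewrite !mxE.
  - move=> a Aa.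
    set S := [set inf [set enorm (x - y) | y in A0] | x in A].
    have hS : has_ubound S.
      have [M hM] := @finite_ub R _ S id (finite_image _ fA).
      by exists M.
    have : inf [set enorm (a - y) | y in A0] < delta.
      by apply: le_lt_trans h1; apply: ub_le_sup => //; exists a.
    move/inf_lt => [|_ [b A0b <-] hb].
      by case: nA0 => b A0b; exists (enorm (a - b)), b.
    exists b => // j; apply: ltW; apply: le_lt_trans hb.
    by have := coord_le_enorm (a - b) j; rewrite !mxE.
  - move=> b A0b.
    set S := [set inf [set enorm (x - y) | x in A] | y in A0].
    have hS : has_ubound S.
      have [M hM] := @finite_ub R _ S id (finite_image _ fA0).
      by exists M.
    have : inf [set enorm (x - b) | x in A] < delta.
      by apply: le_lt_trans h2; apply: ub_le_sup => //; exists b.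
    move/inf_lt => [|_ [a Aa <-] ha].
      by case: nA => a Aa; exists (enorm (a - b)), a.
    exists a => // j; apply: ltW; apply: le_lt_trans ha.
    by have := coord_le_enorm (a - b) j; rewrite !mxE.
have igw := ig w A Ww cA.
have igw0 := ig w0 A0 Ww0 cA0.
have iD : P.-integrable setT (EFin \o (fun t => g w A t - g w0 A0 t)).
  apply: (eq_integrable _ (fun t => ((EFin \o g w A) t - (EFin \o g w0 A0) t)%E)) => //.
  exact: integrableB.
rewrite /objective -/(g w A) -/(g w0 A0).
rewrite -RintegralB //.
apply: le_lt_trans (le_normr_Rintegral _ iD) _ => //.
apply: (@le_lt_trans _ _ (Rintegral P setT (fun t => delta * Bd M0 t))).
  apply: le_Rintegral => //.
    exact: integrable_norm.
  apply: (eq_integrable _ (fun t => (delta%:E * (EFin \o Bd M0) t)%E)) => //.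
  exact: integrableZl.
rewrite RintegralZl // -/C.
nra.
Qed.
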